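(* Fix $\zeta\in\mathbb{R}$ and $\omega\in\mathbb{C}$ with $0<\operatorname{Im}\omega<1/2$, and for $-1/2<\operatorname{Im} t<0$ let $$f(t) = - \frac{\operatorname{Li}_{2}(-e^{2\pi \zeta})+\operatorname{Li}_{2}(-e^{2\pi (t-\zeta)})-\operatorname{Li}_{2}(-e^{2\pi (t + \frac{i}{2})})}{2 \pi i} + i \pi \zeta^2 +2 i \pi t \omega +\pi t+\frac{i \pi }{6},\qquad g(t) = e^{\pi t-\frac{1}{2} \ln \left(1-e^{2 \pi t}\right)}.$$ Writing $t=t_1+it_2$, there are constants $C>0$ and $c>0$ such that $$\big|e^{f(t)/b^2} g(t)\big| \leq C e^{-\frac{c}{b^2}|t_1|}$$ for all sufficiently large $|t_1|$, all $t_2\in(-1/2,0)$, and all sufficiently small $b>0$.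
   Context: Principal branches: $\operatorname{Im}\ln z\in(-\pi,\pi]$ and $\operatorname{Li}_2(z)=-\int_0^z\frac{\ln(1-u)}{u}du$ for $z\in\mathbb{C}\setminus[1,\infty)$. *)

(* Defs.v *)
From Stdlib Require Import Reals Lra.
From Coquelicot Require Import Coquelicot.
Open Scope R_scope.

Definition Cexp (z : C) : C :=
  (exp (Re z) * cos (Im z), exp (Re z) * sin (Im z)).

(* principal argument, values in (-PI, PI]:
   off the closed negative real axis, Arg z = 2 atan (y / (|z| + x));
   on the negative real axis, Arg z = PI; Arg 0 = 0 (irrelevant). *)
Definition Carg (z : C) : R :=
  if Req_EM_T (Im z) 0 then
    (if Rlt_dec (Re z) 0 then PI else 0)
  else 2 * atan (Im z / (Cmod z + Re z)).

Definition Clog (z : C) : C := (ln (Cmod z), Carg z).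

(* Dilogarithm Li_2(z) = - int_0^z ln(1-u)/u du along the segment [0,z]
   (the cut plane C \ [1,oo) is star-shaped w.r.t. 0); with u = s z,
   Li_2(z) = - int_0^1 Log(1 - s z) / s ds, integral taken componentwise. *)
Definition Li2_integrand (z : C) (s : R) : C :=
  Cdiv (Clog (Cminus 1 (Cmult (RtoC s) z))) (RtoC s).

Definition Li2 (z : C) : C :=
  Copp (RInt (fun s => Re (Li2_integrand z s)) 0 1,
        RInt (fun s => Im (Li2_integrand z s)) 0 1).

Definition f_lem (zeta : R) (omega t : C) : C :=
  let tpi := RtoC (2 * PI) in
  Cplus (Copp (Cdiv
     (Cminus (Cplus (Li2 (Copp (Cexp (Cmult tpi (RtoC zeta)))))
                    (Li2 (Copp (Cexp (Cmult tpi (Cminus t (RtoC zeta)))))))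
             (Li2 (Copp (Cexp (Cmult tpi (Cplus t (Cmult Ci (RtoC (1/2)))))))))
     (Cmult tpi Ci)))
  (Cplus (Cmult (Cmult Ci (RtoC PI)) (RtoC (zeta ^ 2)))
  (Cplus (Cmult (Cmult (Cmult (RtoC 2) Ci) (RtoC PI)) (Cmult t omega))
  (Cplus (Cmult (RtoC PI) t)
         (Cdiv (Cmult Ci (RtoC PI)) (RtoC 6))))).

Definition g_lem (t : C) : C :=
  Cexp (Cminus (Cmult (RtoC PI) t)
               (Cmult (RtoC (1/2)) (Clog (Cminus 1 (Cexp (Cmult (RtoC (2 * PI)) t)))))).

(* Main.v *)
Require Import Defs.
From Stdlib Require Import Reals Lra.
From Coquelicot Require Import Coquelicot.
Open Scope R_scope.


Lemma atan_le_id (y : R) : 0 <= y -> atan y <= y.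
Proof.
  intros Hy. destruct (Req_dec y 0) as [->|Hne]. { rewrite atan_0; lra. }
  destruct (MVT_cor1 atan 0 y (fun x => derivable_pt_atan x)) as [c [E _]]; [lra|].
  rewrite derive_pt_atan, atan_0 in E.
  assert (0 < 1 + c²) by (unfold Rsqr; nra).
  assert (1 / (1 + c²) <= 1).
  { unfold Rdiv. rewrite Rmult_1_l. rewrite <- Rinv_1. apply Rinv_le_contravar; [lra|].
    unfold Rsqr; nra. }
  assert (0 < 1/(1+c²)) by (apply Rdiv_lt_0_compat; lra).
  nra.
Qed.

Lemma Rabs_atan_le (y : R) : Rabs (atan y) <= Rabs y.
Proof.
  destruct (Rle_or_lt 0 y) as [H|H].
  - rewrite (Rabs_pos_eq y) by lra. assert (0 <= atan y).
    { destruct (Req_dec y 0) as [->|]. rewrite atan_0; lra.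
      left. rewrite <- atan_0. apply atan_increasing. lra. }
    rewrite Rabs_pos_eq by lra. apply atan_le_id; lra.
  - assert (E : atan y = - atan (-y)) by (rewrite atan_opp; ring). rewrite E.
    assert (0 <= atan (-y)) by (left; rewrite <- atan_0; apply atan_increasing; lra).
    rewrite Rabs_Ropp, (Rabs_pos_eq (atan (-y))) by lra. rewrite (Rabs_left y) by lra.
    apply atan_le_id; lra.
Qed.

Lemma Carg_facts (x y : R) : y <> 0 ->
  let m := sqrt (x^2 + y^2) in
  0 < m /\ 0 < m + x /\ Carg (x,y) = 2 * atan (y / (m + x)) /\
  -PI < Carg (x,y) < PI /\ cos (Carg (x,y)) * m = x /\ sin (Carg (x,y)) * m = y /\
  (0 < y -> 0 < Carg (x,y)) /\ (y < 0 -> Carg (x,y) < 0).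
Proof.
  intros Hy m.
  assert (Hm2 : m * m = x^2 + y^2).
  { unfold m. apply sqrt_sqrt. nra. }
  assert (Hm0 : 0 <= m) by (unfold m; apply sqrt_pos).
  assert (Hy2 : 0 < y * y) by (destruct (Rlt_or_le 0 y); [nra| assert (y<0) by lra; nra]).
  assert (Hmx : 0 < m + x) by nra.
  assert (Hm : 0 < m) by nra.
  assert (HC : Carg (x,y) = 2 * atan (y / (m + x))).
  { unfold Carg; simpl. destruct (Req_EM_T y 0); [contradiction|].
    unfold Cmod; simpl. reflexivity. }
  set (k := y / (m + x)) in *.
  pose proof (atan_bound k) as Hb.
  assert (Hk : 1 + k² > 0) by (unfold Rsqr; nra).
  assert (Hs : sqrt (1 + k²) * sqrt (1 + k²) = 1 + k²) by (apply sqrt_sqrt; lra).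
  assert (Hsp : 0 < sqrt (1 + k²)) by (apply sqrt_lt_R0; lra).
  assert (Hcos : cos (Carg (x,y)) = (1 - k^2) / (1 + k^2)).
  { rewrite HC, cos_2a_cos, cos_atan. set (S := sqrt (1 + k²)) in *. unfold Rsqr in *.
    replace (2 * (1 / S) * (1 / S)) with (2 / (S * S)) by (field; lra).
    rewrite Hs. field. lra. }
  assert (Hsin : sin (Carg (x,y)) = 2 * k / (1 + k^2)).
  { rewrite HC, sin_2a, sin_atan, cos_atan. set (S := sqrt (1 + k²)) in *. unfold Rsqr in *.
    replace (2 * (k / S) * (1 / S)) with (2 * k / (S * S)) by (field; lra).
    rewrite Hs. field. lra. }
  assert (Hk2 : k * (m + x) = y) by (unfold k; field; lra).
  assert (E1 : (m+x)^2 + y^2 = 2*m*(m+x)) by nra.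
  assert (E2 : (m+x)^2 - y^2 = 2*x*(m+x)) by nra.
  repeat split; auto.
  - rewrite HC; lra.
  - rewrite HC; lra.
  - rewrite Hcos.
    replace ((1 - k ^ 2) / (1 + k ^ 2)) with (((m+x)^2 - y^2)/((m+x)^2 + y^2))
      by (unfold k; field; nra).
    rewrite E1, E2. field. lra.
  - rewrite Hsin.
    replace (2 * k / (1 + k ^ 2)) with (2 * y * (m+x)/((m+x)^2 + y^2))
      by (unfold k; field; nra).
    rewrite E1. field. lra.
  - intros Hp. rewrite HC. assert (0 < k) by (unfold k; apply Rdiv_lt_0_compat; lra).
    pose proof (atan_increasing 0 k H). rewrite atan_0 in H0. lra.
  - intros Hp. rewrite HC. assert (k < 0).
    { unfold k, Rdiv. apply Rmult_neg_pos; [lra| apply Rinv_0_lt_compat; lra]. }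
    pose proof (atan_increasing k 0 H). rewrite atan_0 in H0. lra.
Qed.


Lemma sin_sign (φ : R) : -PI < φ < PI -> (0 < sin φ -> 0 < φ) /\ (sin φ < 0 -> φ < 0).
Proof.
  intros H. split; intros Hs.
  - destruct (Rlt_or_le 0 φ) as [|Hle]; auto.
    destruct (Req_dec φ 0) as [->|]. rewrite sin_0 in Hs; lra.
    pose proof (sin_lt_0_var φ ltac:(lra) ltac:(lra)); lra.
  - destruct (Rlt_or_le φ 0) as [|Hle]; auto.
    destruct (Req_dec φ 0) as [->|]. rewrite sin_0 in Hs; lra.
    pose proof (sin_gt_0 φ ltac:(lra) ltac:(lra)); lra.
Qed.

Lemma pw (u φ : R) : 0 < u -> -PI < φ < PI -> sin φ <> 0 ->
  Rabs (Carg (1 + u * cos φ, u * sin φ) - φ * u / (1 + u)) <= 20 * u / (1 + u^2).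
Proof.
  intros Hu Hφ Hs.
  set (c := cos φ) in *. set (s := sin φ) in *.
  assert (Hcs : s*s + c*c = 1) by (pose proof (sin2_cos2 φ); unfold Rsqr in *; auto).
  assert (Hy : u * s <> 0) by (intro H; apply Rmult_integral in H; lra).
  destruct (Carg_facts (1 + u*c) (u*s) Hy) as (Hm & Hmx & HC & HG & Hcos & Hsin & Hpos & Hneg).
  set (m := sqrt ((1 + u*c)^2 + (u*s)^2)) in *.
  set (G := Carg (1 + u * c, u * s)) in *.
  pose proof PI_4 as P4. pose proof PI_RGT_0 as P0.
  assert (Hc1 : -1 <= c <= 1) by (unfold c; apply COS_bound).
  assert (Hs1 : -1 <= s <= 1) by (unfold s; apply SIN_bound).
  assert (Hpos2 : 0 < 1 + u^2) by nra.
  assert (Hphi : Rabs (φ * u / (1 + u)) <= PI * u / (1 + u)).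
  { unfold Rdiv. rewrite !Rabs_mult, (Rabs_pos_eq u), (Rabs_pos_eq (/ (1+u))) by
      (try apply Rlt_le, Rinv_0_lt_compat; lra).
    apply Rmult_le_compat_r; [left; apply Rinv_0_lt_compat; lra|].
    apply Rmult_le_compat_r; [lra|]. apply Rabs_le; lra. }
  assert (Hrhs : 0 <= PI * u / (1 + u)) by (apply Rdiv_le_0_compat; nra).
  destruct (Rle_or_lt u (1/2)) as [Hsmall|Hbig].
  -
    assert (HGb : Rabs G <= 2 * u).
    { rewrite HC, Rabs_mult, (Rabs_pos_eq 2) by lra.
      apply Rmult_le_compat_l; [lra|]. eapply Rle_trans; [apply Rabs_atan_le|].
      assert (1 <= m + (1 + u*c)).
      { assert (Hx : 1/2 <= 1 + u*c) by nra.
        assert (m * m = (1 + u*c)^2 + (u*s)^2) by (unfold m; apply sqrt_sqrt; nra).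
        nra. }
      unfold Rdiv. rewrite Rabs_mult, Rabs_inv, (Rabs_pos_eq (m + _)) by lra.
      assert (Rabs (u*s) <= u).
      { rewrite Rabs_mult, Rabs_pos_eq by lra.
        assert (Rabs s <= 1) by (apply Rabs_le; lra). nra. }
      apply Rle_trans with (Rabs (u*s) * 1).
      apply Rmult_le_compat_l; [apply Rabs_pos|].
      rewrite <- Rinv_1. apply Rinv_le_contravar; lra. lra. }
    eapply Rle_trans; [apply Rabs_triang|]. rewrite Rabs_Ropp.
    assert (PI * u / (1 + u) <= 4 * u).
    { apply (Rmult_le_reg_r (1+u)); [lra|]. field_simplify; nra. }
    assert (16 * u <= 20 * u / (1 + u^2)).
    { apply (Rmult_le_reg_r (1+u^2)); [lra|]. field_simplify; nra. }
    lra.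
  - destruct (Rle_or_lt u 2) as [Hmid|Hlarge].
    + eapply Rle_trans; [apply Rabs_triang|]. rewrite Rabs_Ropp.
      assert (Rabs G <= PI) by (apply Rabs_le; lra).
      assert (PI * u / (1 + u) <= PI).
      { apply (Rmult_le_reg_r (1+u)); [lra|]. field_simplify; nra. }
      assert (8 <= 20 * u / (1 + u^2)).
      { apply (Rmult_le_reg_r (1+u^2)); [lra|]. field_simplify; nra. }
      lra.
    + set (d := G - φ).
      assert (Hcd : cos d * m = c + u).
      { unfold d. rewrite cos_minus. fold c s.
        replace ((cos G * c + sin G * s) * m) with ((cos G * m) * c + (sin G * m) * s) by ring.
        rewrite Hcos, Hsin. nra. }
      assert (Hsd : sin d * m = - s).
      { unfold d. rewrite sin_minus. fold c s.
        replace ((sin G * c - cos G * s) * m) with ((sin G * m) * c - (cos G * m) * s) by ring.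
        rewrite Hcos, Hsin. nra. }
      assert (Hcdp : 0 < cos d).
      { assert (0 < cos d * m) by (rewrite Hcd; lra).
        destruct (Rle_or_lt (cos d) 0); [nra|auto]. }
      assert (Hdpi : -PI < d < PI).
      { destruct (sin_sign φ Hφ) as [S1 S2].
        destruct (Rlt_or_le 0 s) as [Hsp|Hsn].
        - assert (0 < u*s) by nra. specialize (Hpos H). specialize (S1 Hsp). unfold d; lra.
        - assert (s < 0) by lra. assert (u*s < 0) by nra. specialize (Hneg H0).
          specialize (S2 H). unfold d; lra. }
      assert (Hd2 : -(PI/2) < d < PI/2).
      { split.
        - destruct (Rle_or_lt d (-(PI/2))) as [Hle|]; auto.
          pose proof (cos_le_0 (-d) ltac:(lra) ltac:(lra)). rewrite cos_neg in H. lra.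
        - destruct (Rlt_or_le d (PI/2)) as [|Hle]; auto.
          pose proof (cos_le_0 d ltac:(lra) ltac:(lra)). lra. }
      assert (Htan : tan d = - s / (c + u)).
      { unfold tan. apply (Rmult_eq_reg_r (cos d * (c + u))); [|nra].
        field_simplify; [|lra|lra]. 
        replace (sin d * c + sin d * u) with (sin d * (c+u)) by ring. rewrite <- Hcd. replace (- cos d * s) with (cos d * (-s)) by ring. rewrite <- Hsd. ring. }
      assert (Hdb : Rabs d <= 2 / u).
      { rewrite <- (atan_tan d Hd2). eapply Rle_trans; [apply Rabs_atan_le|].
        rewrite Htan. unfold Rdiv at 1. rewrite Rabs_mult, Rabs_Ropp, Rabs_inv, (Rabs_pos_eq (c+u)) by lra.
        assert (Rabs s <= 1) by (apply Rabs_le; lra).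
        apply Rle_trans with (1 * / (c + u)).
        apply Rmult_le_compat_r; [left; apply Rinv_0_lt_compat; lra| lra].
        apply (Rmult_le_reg_r (u * (c+u))); [nra|]. field_simplify; nra. }
      replace (G - φ * u / (1 + u)) with (d + φ / (1 + u)) by (unfold d; field; lra).
      eapply Rle_trans; [apply Rabs_triang|].
      assert (Rabs (φ / (1 + u)) <= 4 / u).
      { unfold Rdiv. rewrite Rabs_mult, Rabs_inv, (Rabs_pos_eq (1+u)) by lra.
        assert (Rabs φ <= 4) by (apply Rabs_le; lra).
        apply Rle_trans with (4 * / (1+u)).
        apply Rmult_le_compat_r; [left; apply Rinv_0_lt_compat; lra| lra].
        apply Rmult_le_compat_l; [lra|]. apply Rinv_le_contravar; lra. }
      assert (6 / u <= 20 * u / (1 + u^2)).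
      { apply (Rmult_le_reg_r (u * (1+u^2))); [nra|]. field_simplify; nra. }
      assert (2/u + 4/u = 6/u) by (field; lra). lra.
Qed.


Definition Gform (p q s : R) : R :=
  2 * atan (s * q / (sqrt ((1 + s * p) ^ 2 + (s * q) ^ 2) + (1 + s * p))).

Lemma Gform_den (p q s : R) : q <> 0 ->
  0 < (1 + s * p) ^ 2 + (s * q) ^ 2 /\
  0 < sqrt ((1 + s * p) ^ 2 + (s * q) ^ 2) + (1 + s * p).
Proof.
  intros Hq. destruct (Req_dec s 0) as [->|Hs].
  - split. nra. replace ((1 + 0 * p) ^ 2 + (0 * q) ^ 2) with 1 by ring. rewrite sqrt_1. lra.
  - assert (Hy : s * q <> 0) by (intro H; apply Rmult_integral in H; tauto).
    destruct (Carg_facts (1 + s*p) (s*q) Hy) as (Hm & Hmx & _).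
    split; [|exact Hmx].
    assert (0 < (s*q)*(s*q)) by (destruct (Rlt_or_le 0 (s*q)); [nra|assert (s*q<0) by lra; nra]).
    assert ((s*q)^2 = (s*q)*(s*q)) by ring. assert (0 <= (1+s*p)^2) by apply pow2_ge_0. lra.
Qed.

Lemma Gform_Carg (p q s : R) : s * q <> 0 -> Carg (1 + s * p, s * q) = Gform p q s.
Proof.
  intros Hy. destruct (Carg_facts (1 + s*p) (s*q) Hy) as (_ & _ & HC & _). exact HC.
Qed.

Lemma Gform_derive (p q s : R) : q <> 0 -> ex_derive (Gform p q) s.
Proof.
  intros Hq. destruct (Gform_den p q s Hq) as [H1 H2]. unfold Gform.
  auto_derive. simpl in H1, H2. repeat split; lra.
Qed.

Lemma Gform_derive0 (p q : R) : q <> 0 -> is_derive (Gform p q) 0 q.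
Proof.
  intros Hq. destruct (Gform_den p q 0 Hq) as [H1 H2]. unfold Gform.
  auto_derive. simpl in H1, H2. repeat split; lra.
  replace ((1 + 0 * p) * ((1 + 0 * p) * 1) + 0 * q * (0 * q * 1)) with 1 by ring.
  rewrite sqrt_1. field_simplify; try lra.
Qed.

Definition hc (p q s : R) : R := if Req_EM_T s 0 then q else Gform p q s / s.

Lemma hc_cont (p q s : R) : q <> 0 -> continuous (hc p q) s.
Proof.
  intros Hq. destruct (Req_EM_T s 0) as [->|Hs].
  - apply continuity_pt_filterlim.
    pose proof (proj1 (is_derive_Reals _ _ _) (Gform_derive0 p q Hq)) as D.
    intros eps Heps. destruct (D eps Heps) as [del Hdel].
    exists del. split; [apply cond_pos|].
    intros x [[_ Hx0] Hxd]. change R in x. simpl in Hxd. unfold R_dist in *. simpl.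
    unfold hc. destruct (Req_EM_T x 0) as [E|_]; [congruence|].
    destruct (Req_EM_T 0 0) as [_|E]; [|congruence].
    specialize (Hdel x (not_eq_sym Hx0) ltac:(rewrite Rminus_0_r in Hxd; exact Hxd)).
    replace (0 + x) with x in Hdel by ring.
    assert (G0 : Gform p q 0 = 0).
    { unfold Gform. replace (0 * q) with 0 by ring. unfold Rdiv. rewrite Rmult_0_l, atan_0. ring. }
    rewrite G0, Rminus_0_r in Hdel. exact Hdel.
  - apply (continuous_ext_loc _ (fun y => Gform p q y / y)).
    + assert (Hp : 0 < Rabs s) by (apply Rabs_pos_lt; exact Hs).
      exists (mkposreal _ Hp). intros y Hy. unfold hc.
      destruct (Req_EM_T y 0) as [->|]; [|reflexivity].
      exfalso. cbv [ball] in Hy. simpl in Hy. unfold AbsRing_ball, abs, minus, plus, opp in Hy. simpl in Hy.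
      rewrite Rplus_0_l, Rabs_Ropp in Hy. lra.
    + apply (@ex_derive_continuous R_AbsRing R_NormedModule (fun y => Gform p q y / y)).
      apply (ex_derive_div (Gform p q) (fun y => y)); auto.
      apply Gform_derive; auto. apply ex_derive_id.
Qed.


Lemma key (Rr φ : R) : 0 < Rr -> -PI < φ < PI -> sin φ <> 0 ->
  Rabs (RInt (fun s => Carg (1 + s * (Rr * cos φ), s * (Rr * sin φ)) / s) 0 1
        - φ * ln (1 + Rr)) <= 10 * PI.
Proof.
  intros HR Hφ Hs.
  set (p := Rr * cos φ). set (q := Rr * sin φ).
  assert (Hq : q <> 0) by (unfold q; intro H; apply Rmult_integral in H; lra).
  assert (Hint : ex_RInt (hc p q) 0 1).
  { apply (ex_RInt_continuous (V:=R_CompleteNormedModule)). intros; apply hc_cont; auto. }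
  assert (Hext : RInt (fun s => Carg (1 + s * p, s * q) / s) 0 1 = RInt (hc p q) 0 1).
  { apply RInt_ext. rewrite Rmin_left, Rmax_right by lra. intros s Hs01.
    unfold hc. destruct (Req_EM_T s 0) as [E|_]; [lra|].
    rewrite Gform_Carg; [reflexivity|]. intro H; apply Rmult_integral in H; lra. }
  rewrite Hext.
  set (cmp := fun s => φ * Rr / (1 + s * Rr)).
  assert (Hcmp : is_RInt cmp 0 1 (φ * ln (1 + Rr))).
  { assert (H := is_RInt_derive (fun s => φ * ln (1 + s * Rr)) cmp 0 1).
    replace (φ * ln (1 + Rr)) with (minus (φ * ln (1 + 1 * Rr)) (φ * ln (1 + 0 * Rr))).
    - apply H.
      + intros x Hx. rewrite Rmin_left, Rmax_right in Hx by lra. unfold cmp.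
        auto_derive. nra. field. nra.
      + intros x Hx. rewrite Rmin_left, Rmax_right in Hx by lra. unfold cmp.
        apply (@ex_derive_continuous R_AbsRing R_NormedModule).
        auto_derive. nra.
    - unfold minus, plus, opp; simpl. rewrite Rmult_0_l, Rplus_0_r, ln_1, Rmult_1_l. ring. }
  set (bnd := fun s => 20 * Rr / (1 + (s * Rr) ^ 2)).
  assert (Hbnd : is_RInt bnd 0 1 (20 * atan Rr)).
  { assert (H := is_RInt_derive (fun s => 20 * atan (s * Rr)) bnd 0 1).
    replace (20 * atan Rr) with (minus (20 * atan (1 * Rr)) (20 * atan (0 * Rr))).
    - apply H.
      + intros x Hx. unfold bnd. auto_derive. auto. unfold Rsqr. field. nra.
      + intros x Hx. unfold bnd.
        apply (@ex_derive_continuous R_AbsRing R_NormedModule).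
        auto_derive. nra.
    - unfold minus, plus, opp; simpl. rewrite Rmult_0_l, atan_0, Rmult_1_l. ring. }
  assert (Hdiff : RInt (fun s => hc p q s - cmp s) 0 1 = RInt (hc p q) 0 1 - φ * ln (1 + Rr)).
  { assert (E := RInt_minus (V:=R_CompleteNormedModule) (hc p q) cmp 0 1 Hint (ex_intro _ _ Hcmp)).
    unfold minus, plus, opp in E; simpl in E. rewrite (is_RInt_unique _ _ _ _ Hcmp) in E.
    unfold Rminus. rewrite <- E. reflexivity. }
  assert (Hexd : ex_RInt (fun s => hc p q s - cmp s) 0 1).
  { apply (ex_RInt_minus (V:=R_NormedModule) (hc p q) cmp); auto. exists (φ * ln (1 + Rr)); auto. }
  assert (Hpt : forall s, 0 < s < 1 -> Rabs (hc p q s - cmp s) <= bnd s).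
  { intros s Hs01. unfold hc. destruct (Req_EM_T s 0) as [E|_]; [lra|].
    rewrite <- Gform_Carg by (intro H; apply Rmult_integral in H; lra).
    assert (Hu : 0 < s * Rr) by nra.
    pose proof (pw (s * Rr) φ Hu Hφ Hs) as P.
    replace (1 + s * Rr * cos φ, s * Rr * sin φ) with (1 + s * p, s * q) in P
      by (unfold p, q; f_equal; ring).
    unfold cmp, bnd.
    replace (Carg (1 + s * p, s * q) / s - φ * Rr / (1 + s * Rr))
      with ((Carg (1 + s * p, s * q) - φ * (s * Rr) / (1 + s * Rr)) / s) by (field; lra).
    unfold Rdiv at 1. rewrite Rabs_mult, Rabs_inv, (Rabs_pos_eq s) by lra.
    apply (Rmult_le_reg_r s); [lra|].
    replace (Rabs (Carg (1 + s * p, s * q) - φ * (s * Rr) / (1 + s * Rr)) * / s * s)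
      with (Rabs (Carg (1 + s * p, s * q) - φ * (s * Rr) / (1 + s * Rr))) by (field; lra).
    replace (20 * Rr / (1 + (s * Rr) ^ 2) * s) with (20 * (s * Rr) / (1 + (s * Rr) ^ 2)) by
      (field; nra).
    exact P. }
  assert (Hexb : ex_RInt bnd 0 1) by (exists (20 * atan Rr); auto).
  assert (Hup : RInt (fun s => hc p q s - cmp s) 0 1 <= RInt bnd 0 1).
  { apply RInt_le; auto. lra. intros x Hx. specialize (Hpt x Hx). apply Rabs_le_between in Hpt; lra. }
  assert (Hlo : RInt (fun s => - bnd s) 0 1 <= RInt (fun s => hc p q s - cmp s) 0 1).
  { apply RInt_le; auto. lra. apply (ex_RInt_opp (V:=R_NormedModule)); auto.
    intros x Hx. specialize (Hpt x Hx). apply Rabs_le_between in Hpt; lra. }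
  assert (Eo := RInt_opp (V:=R_CompleteNormedModule) bnd 0 1 Hexb).
  unfold opp in Eo; simpl in Eo. rewrite Eo in Hlo.
  rewrite (is_RInt_unique _ _ _ _ Hbnd) in Hup, Hlo. 
  rewrite Hdiff in Hup, Hlo.
  pose proof (atan_bound Rr). assert (0 < atan Rr) by (rewrite <- atan_0; apply atan_increasing; lra).
  apply Rabs_le. lra.
Qed.


Lemma Im_Li2_eq (p q : R) :
  Im (Li2 (Copp (p, q))) = - RInt (fun s => Carg (1 + s * p, s * q) / s) 0 1.
Proof.
  unfold Li2. simpl. f_equal. apply RInt_ext. rewrite Rmin_left, Rmax_right by lra.
  intros s Hs. unfold Li2_integrand.
  replace (Cminus 1 (Cmult (RtoC s) (Copp (p, q)))) with ((1 + s * p, s * q) : C)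
    by (unfold Cminus, Cmult, Copp, Cplus, RtoC; simpl; f_equal; ring).
  unfold Clog, Cdiv, Cmult, Cinv, RtoC. simpl. field. lra.
Qed.

Lemma Cexp_pair (a b : R) : Cexp (a, b) = (exp a * cos b, exp a * sin b).
Proof. reflexivity. Qed.

Lemma Re_f_gen (zeta w1 w2 t1 t2 : R) (L1 L2 L3 : C) :
  Re (Cplus (Copp (Cdiv (Cminus (Cplus L1 L2) L3) (Cmult (RtoC (2 * PI)) Ci)))
  (Cplus (Cmult (Cmult Ci (RtoC PI)) (RtoC (zeta ^ 2)))
  (Cplus (Cmult (Cmult (Cmult (RtoC 2) Ci) (RtoC PI)) (Cmult (t1, t2) (w1, w2)))
  (Cplus (Cmult (RtoC PI) (t1, t2))
         (Cdiv (Cmult Ci (RtoC PI)) (RtoC 6))))))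
  = - (Im L1 + Im L2 - Im L3) / (2 * PI) - 2 * PI * (t1 * w2 + t2 * w1) + PI * t1.
Proof.
  destruct L1 as [a1 b1], L2 as [a2 b2], L3 as [a3 b3].
  pose proof PI_RGT_0.
  unfold Cdiv, Cminus, Cplus, Cmult, Copp, Cinv, RtoC, Ci. simpl. field. nra.
Qed.

Lemma Re_f (zeta t1 t2 w1 w2 : R) :
  Re (f_lem zeta (w1, w2) (t1, t2)) =
  - (Im (Li2 (Copp (Cexp (Cmult (RtoC (2*PI)) (RtoC zeta)))))
     + Im (Li2 (Copp (Cexp (Cmult (RtoC (2*PI)) (Cminus (t1,t2) (RtoC zeta))))))
     - Im (Li2 (Copp (Cexp (Cmult (RtoC (2*PI)) (Cplus (t1,t2) (Cmult Ci (RtoC (1/2))))))))) / (2 * PI)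
  - 2 * PI * (t1 * w2 + t2 * w1) + PI * t1.
Proof. unfold f_lem. apply Re_f_gen. Qed.

Lemma Cmod_Cexp (z : C) : Cmod (Cexp z) = exp (Re z).
Proof.
  destruct z as [a b]. rewrite Cexp_pair. unfold Cmod. simpl.
  replace ((exp a * cos b) * ((exp a * cos b) * 1) + (exp a * sin b) * ((exp a * sin b) * 1))
    with (exp a * exp a) by (pose proof (sin2_cos2 b); unfold Rsqr in *; nra).
  apply sqrt_square. left; apply exp_pos.
Qed.

Lemma Re_div_real (F : C) (x : R) : x <> 0 -> Re (Cdiv F (RtoC x)) = Re F / x.
Proof.
  intros Hx. destruct F as [a b]. unfold Cdiv, Cmult, Cinv, RtoC; simpl. field. auto.
Qed.

Lemma g_bound (t1 t2 : R) : 1 <= Rabs t1 -> Cmod (g_lem (t1, t2)) <= 2.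
Proof.
  intros Ht. unfold g_lem. rewrite Cmod_Cexp.
  replace (Cmult (RtoC (2 * PI)) (t1, t2)) with ((2 * PI * t1, 2 * PI * t2) : C)
    by (unfold Cmult, RtoC; simpl; f_equal; ring).
  rewrite Cexp_pair.
  set (E := exp (2 * PI * t1)). set (th := 2 * PI * t2).
  set (W := Cminus 1 (E * cos th, E * sin th)).
  replace (Re (Cminus (Cmult (RtoC PI) (t1, t2)) (Cmult (RtoC (1 / 2)) (Clog W))))
    with (PI * t1 - 1/2 * ln (Cmod W))
    by (unfold Cminus, Cmult, Cplus, Copp, RtoC, Clog; simpl; ring).
  pose proof PI_RGT_0 as HPI. pose proof PI2_1 as HPI2.
  assert (HE : 0 < E) by apply exp_pos.
  assert (Hc : cos th <= 1) by apply COS_bound.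
  assert (HW : Rabs (1 - E) <= Cmod W).
  { unfold W, Cmod, Cminus, Cplus, Copp, RtoC; simpl.
    rewrite <- sqrt_Rsqr_abs. apply sqrt_le_1_alt.
    pose proof (sin2_cos2 th). unfold Rsqr in *. nra. }
  assert (HEb : (2 <= E /\ E / Rabs (1 - E) <= 2) \/ (E <= 1/2 /\ E / Rabs (1 - E) <= 2)).
  { destruct (Rle_or_lt 0 t1) as [Hp|Hn].
    - rewrite Rabs_pos_eq in Ht by lra. left.
      assert (2 <= E).
      { unfold E. assert (0 < 2*PI*t1) by nra. pose proof (exp_ineq1 (2*PI*t1) ltac:(lra)). nra. }
      split; auto. rewrite Rabs_left by lra.
      apply (Rmult_le_reg_r (- (1 - E))); [lra|]. field_simplify; lra.
    - rewrite Rabs_left in Ht by lra. right.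
      assert (E <= 1/2).
      { assert (Hm : exp (2*PI*t1) * exp (- (2*PI*t1)) = 1) by (rewrite <- exp_plus; replace (2 * PI * t1 + - (2 * PI * t1)) with 0 by ring; apply exp_0).
        assert (Hq : 0 < - (2*PI*t1)) by nra. pose proof (exp_ineq1 (- (2*PI*t1)) ltac:(lra)) as Hx. fold E in Hm. set (X := exp (- (2 * PI * t1))) in *. assert (2 < X) by nra. nra. }
      split; auto. rewrite Rabs_pos_eq by lra.
      apply (Rmult_le_reg_r (1 - E)); [lra|]. field_simplify; lra. }
  assert (Hm0 : 0 < Rabs (1 - E)) by (apply Rabs_pos_lt; destruct HEb; lra).
  assert (Hm : 0 < Cmod W) by lra.
  assert (Hsq : exp (PI * t1 - 1/2 * ln (Cmod W)) * exp (PI * t1 - 1/2 * ln (Cmod W)) = E / Cmod W).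
  { rewrite <- exp_plus.
    replace (PI * t1 - 1 / 2 * ln (Cmod W) + (PI * t1 - 1 / 2 * ln (Cmod W)))
      with (2 * PI * t1 + - ln (Cmod W)) by field.
    rewrite exp_plus, exp_Ropp, exp_ln by auto. fold E. field. lra. }
  assert (E / Cmod W <= 2).
  { apply Rle_trans with (E / Rabs (1 - E)); [|destruct HEb; tauto].
    unfold Rdiv. apply Rmult_le_compat_l; [lra|]. apply Rinv_le_contravar; lra. }
  pose proof (exp_pos (PI * t1 - 1 / 2 * ln (Cmod W))). nra.
Qed.


Lemma ln_le' (x y : R) : 0 < x -> x <= y -> ln x <= ln y.
Proof. intros Hx [H|H]. left; apply ln_increasing; auto. subst; lra. Qed.

Lemma ln_diff (x k : R) : 0 < x -> 0 < k ->
  Rabs (ln (1 + k * x) - ln (1 + x)) <= Rabs (ln k).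
Proof.
  intros Hx Hk. destruct (Rle_or_lt 1 k) as [H1|H1].
  - assert (0 <= ln k) by (rewrite <- ln_1; apply ln_le'; lra).
    assert (ln (1 + x) <= ln (1 + k * x)) by (apply ln_le'; nra).
    assert (ln (1 + k * x) <= ln k + ln (1 + x)).
    { rewrite <- ln_mult by lra. apply ln_le'; nra. }
    rewrite (Rabs_pos_eq (ln k)) by lra. apply Rabs_le; lra.
  - assert (ln k < 0) by (rewrite <- ln_1; apply ln_increasing; lra).
    assert (ln (1 + k * x) <= ln (1 + x)) by (apply ln_le'; nra).
    assert (ln k + ln (1 + x) <= ln (1 + k * x)).
    { rewrite <- ln_mult by lra. apply ln_le'; nra. }
    rewrite (Rabs_left (ln k)) by lra. apply Rabs_le; lra.
Qed.

Lemma Li2_zero (e : R) : 0 < e ->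
  RInt (fun s => Carg (1 + s * (e * cos 0), s * (e * sin 0)) / s) 0 1 = 0.
Proof.
  intros He. rewrite (RInt_ext _ (fun _ => 0)).
  - rewrite RInt_const. unfold scal; simpl. unfold mult; simpl. ring.
  - rewrite Rmin_left, Rmax_right by lra. intros s Hs.
    rewrite cos_0, sin_0. replace (s * (e * 0)) with 0 by ring.
    unfold Carg; simpl. destruct (Req_EM_T 0 0) as [_|]; [|congruence].
    destruct (Rlt_dec (1 + s * (e * 1)) 0); [nra|]. unfold Rdiv; ring.
Qed.

Lemma Re_f_bound (zeta w1 w2 t1 t2 : R) : -(1/2) < t2 < 0 ->
  Re (f_lem zeta (w1, w2) (t1, t2)) <=
  - (1/2) * ln (1 + exp (2 * PI * t1)) + PI * t1 - 2 * PI * t1 * w2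
  + (PI * Rabs zeta + 10 + PI * Rabs w1).
Proof.
  intros Ht2. rewrite Re_f.
  replace (Cmult (RtoC (2 * PI)) (RtoC zeta)) with ((2 * PI * zeta, 0) : C)
    by (unfold Cmult, RtoC; simpl; f_equal; ring).
  replace (Cmult (RtoC (2 * PI)) (Cminus (t1, t2) (RtoC zeta))) with ((2 * PI * (t1 - zeta), 2 * PI * t2) : C)
    by (unfold Cmult, Cminus, Cplus, Copp, RtoC; simpl; f_equal; ring).
  replace (Cmult (RtoC (2 * PI)) (Cplus (t1, t2) (Cmult Ci (RtoC (1 / 2)))))
    with ((2 * PI * t1, 2 * PI * t2 + PI) : C)
    by (unfold Cmult, Cplus, Ci, RtoC; simpl; f_equal; field).
  rewrite !Cexp_pair, !Im_Li2_eq.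
  rewrite Li2_zero by apply exp_pos.
  pose proof PI_RGT_0 as HPI.
  assert (Hs1 : sin (2 * PI * t2) <> 0).
  { pose proof (sin_lt_0_var (2*PI*t2) ltac:(nra) ltac:(nra)). lra. }
  assert (Hs2 : sin (2 * PI * t2 + PI) <> 0).
  { pose proof (sin_gt_0 (2*PI*t2 + PI) ltac:(nra) ltac:(nra)). lra. }
  pose proof (key (exp (2 * PI * (t1 - zeta))) (2 * PI * t2) (exp_pos _) ltac:(split; nra) Hs1) as KB.
  pose proof (key (exp (2 * PI * t1)) (2 * PI * t2 + PI) (exp_pos _) ltac:(split; nra) Hs2) as KD.
  set (AB := RInt _ 0 1) in KB |- *.
  set (AD := RInt _ 0 1) in KD |- *.
  set (lB := ln (1 + exp (2 * PI * (t1 - zeta)))) in *.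
  set (lD := ln (1 + exp (2 * PI * t1))) in *.
  assert (Hdl : Rabs (lB - lD) <= 2 * PI * Rabs zeta).
  { unfold lB, lD.
    replace (exp (2 * PI * (t1 - zeta))) with (exp (- (2 * PI * zeta)) * exp (2 * PI * t1))
      by (rewrite <- exp_plus; f_equal; ring).
    eapply Rle_trans; [apply ln_diff; apply exp_pos|].
    rewrite ln_exp, Rabs_Ropp, Rabs_mult, Rabs_pos_eq by lra. lra. }
  assert (Hth : Rabs (2 * PI * t2) <= PI) by (apply Rabs_le; split; nra).
  assert (Hprod : 2 * PI * t2 * (lB - lD) <= PI * (2 * PI * Rabs zeta)).
  { apply Rle_trans with (Rabs (2 * PI * t2 * (lB - lD))); [apply Rle_abs|].
    rewrite Rabs_mult. apply Rmult_le_compat; auto using Rabs_pos. }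
  assert (Hw : - 2 * PI * t2 * w1 <= PI * Rabs w1).
  { apply Rle_trans with (Rabs (- 2 * PI * t2 * w1)); [apply Rle_abs|].
    rewrite Rabs_mult. apply Rmult_le_compat_r; [apply Rabs_pos|].
    apply Rabs_le; split; nra. }
  apply Rabs_le_between in KB. apply Rabs_le_between in KD.
  assert (Hfin : (AB - AD) / (2 * PI) <= PI * Rabs zeta - (1/2) * lD + 10).
  { apply (Rmult_le_reg_r (2 * PI)); [lra|].
    replace ((AB - AD) / (2 * PI) * (2 * PI)) with (AB - AD) by (field; lra).
    nra. }
  replace (- (- 0 + - AB - - AD) / (2 * PI)) with ((AB - AD) / (2 * PI)) by (field; lra).
  nra.
Qed.


Theorem lemma4p2 (zeta : R) (omega : C) :
  0 < Im omega < 1/2 ->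
  exists (Cc c T b0 : R), 0 < Cc /\ 0 < c /\ 0 < b0 /\
    forall (t1 t2 b : R),
      T < Rabs t1 -> -(1/2) < t2 < 0 -> 0 < b < b0 ->
      Cmod (Cmult (Cexp (Cdiv (f_lem zeta omega (t1, t2)) (RtoC (b ^ 2))))
                  (g_lem (t1, t2)))
        <= Cc * exp (- (c / b ^ 2) * Rabs t1).
Proof.
  destruct omega as [w1 w2]. intros [Hw2a Hw2b]. simpl in Hw2a, Hw2b.
  pose proof PI_RGT_0 as HPI.
  set (k := PI * Rmin (2 * w2) (1 - 2 * w2)).
  assert (Hk : 0 < k) by (unfold k; apply Rmult_lt_0_compat; [lra|]; apply Rmin_glb_lt; lra).
  assert (Hk1 : k <= 2 * PI * w2) by (unfold k; pose proof (Rmin_l (2*w2) (1-2*w2)); nra).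
  assert (Hk2 : k <= PI * (1 - 2 * w2)) by (unfold k; pose proof (Rmin_r (2*w2) (1-2*w2)); nra).
  set (M := PI * Rabs zeta + 10 + PI * Rabs w1).
  assert (HM : 0 <= M) by (unfold M; pose proof (Rabs_pos zeta); pose proof (Rabs_pos w1); nra).
  exists 2, (k / 2), (Rmax 1 (2 * M / k)), 1.
  split; [lra|]. split; [lra|]. split; [lra|].
  intros t1 t2 b HT Ht2 Hb.
  assert (HT1 : 1 <= Rabs t1) by (pose proof (Rmax_l 1 (2 * M / k)); lra).
  assert (HT2 : 2 * M / k < Rabs t1) by (pose proof (Rmax_r 1 (2 * M / k)); lra).
  assert (Hb2 : 0 < b ^ 2) by nra.
  rewrite Cmod_mult, Cmod_Cexp, Re_div_real by lra.
  pose proof (g_bound t1 t2 HT1) as Hg.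
  pose proof (Re_f_bound zeta w1 w2 t1 t2 Ht2) as HR. fold M in HR.
  assert (HRf : Re (f_lem zeta (w1, w2) (t1, t2)) <= - k * Rabs t1 + M).
  { destruct (Rle_or_lt 0 t1) as [Hp|Hn].
    - rewrite Rabs_pos_eq in * by lra.
      assert (2 * PI * t1 <= ln (1 + exp (2 * PI * t1))).
      { rewrite <- (ln_exp (2 * PI * t1)) at 1. apply ln_le'. apply exp_pos. lra. }
      nra.
    - rewrite Rabs_left in * by lra.
      assert (0 <= ln (1 + exp (2 * PI * t1))).
      { rewrite <- ln_1. apply ln_le'. lra. pose proof (exp_pos (2 * PI * t1)). lra. }
      nra. }
  assert (HM2 : M <= k / 2 * Rabs t1).
  { apply (Rmult_lt_compat_r k) in HT2; [|lra].
    replace (2 * M / k * k) with (2 * M) in HT2 by (field; lra). nra. }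
  assert (Hexp : exp (Re (f_lem zeta (w1, w2) (t1, t2)) / b ^ 2) <= exp (- (k / 2 / b ^ 2) * Rabs t1)).
  { assert (Re (f_lem zeta (w1, w2) (t1, t2)) / b ^ 2 <= - (k / 2 / b ^ 2) * Rabs t1).
    { apply (Rmult_le_reg_r (b^2)); [lra|].
      replace (Re (f_lem zeta (w1, w2) (t1, t2)) / b ^ 2 * b ^ 2) with (Re (f_lem zeta (w1, w2) (t1, t2))) by (field; lra).
      replace (- (k / 2 / b ^ 2) * Rabs t1 * b ^ 2) with (- (k / 2) * Rabs t1) by (field; lra).
      lra. }
    destruct H as [H|H]; [left; apply exp_increasing; auto| rewrite H; lra]. }
  pose proof (exp_pos (Re (f_lem zeta (w1, w2) (t1, t2)) / b ^ 2)).
  pose proof (Cmod_ge_0 (g_lem (t1, t2))).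

  apply Rle_trans with (exp (- (k / 2 / b ^ 2) * Rabs t1) * Cmod (g_lem (t1, t2))).
  apply Rmult_le_compat_r; auto.
  rewrite (Rmult_comm 2). apply Rmult_le_compat_l; auto. left; apply exp_pos.
Qed.
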